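(* If $X$ is an infinite set, then the preorder $\mathbf{U}(X)$ has no Heyting negation: there exists $\beta\in\mathbf{U}(X)$ such that for every $\alpha\in\mathbf{U}(X)$ there is $\gamma\in\mathbf{U}(X)$ for which the equivalence $\gamma\wedge\beta\sqsubseteq\bot\iff\gamma\sqsubseteq\alpha$ fails. Consequently $\mathbf{U}(X)$ also has no Heyting implication.
   Context: For functions $\alpha,\beta:X\to[0,1]$ on a set $X$, write $\alpha\sqsubseteq\beta$ if for every $\varepsilon>0$ there exists $\delta>0$ such that for all $x\in X$, $\alpha(x)\le\delta$ implies $\beta(x)\le\varepsilon$. $\mathbf{U}(X)$ is the preorder of all functions $X\to[0,1]$ ordered by $\sqsubseteq$. In it the meet $\gamma\wedge\beta$ is the pointwise maximum, the top is the constant $0$ function, and $\bot$ denotes the bottom element (e.g. the constant function $1$; any function with positive infimum is isomorphic to it). *)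

(* Defs.v *)
From Stdlib Require Import Reals List.
Open Scope R_scope.

Definition infinite_type (X : Type) : Prop :=
  ~ (exists l : list X, forall x : X, In x l).

Definition inU {X : Type} (f : X -> R) : Prop := forall x, 0 <= f x <= 1.

Definition sqle {X : Type} (a b : X -> R) : Prop :=
  forall eps, 0 < eps -> exists delta, 0 < delta /\
    forall x, a x <= delta -> b x <= eps.

Definition umeet {X : Type} (g b : X -> R) : X -> R := fun x => Rmax (g x) (b x).

Definition ubot {X : Type} : X -> R := fun _ => 1.

(* Main.v *)
Require Import Defs.
From Stdlib Require Import Reals Lra Lia List Classical ClassicalEpsilon.
Open Scope R_scope.

Lemma exists_notin (X:Type) (HX: infinite_type X) (l : list X) : exists x, ~ In x l.
Proof.
  destruct (classic (exists x, ~In x l)) as [H|H]; auto.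
  exfalso; apply HX; exists l; intros x; apply NNPP; intro; apply H; eauto.
Qed.

Definition pick {X} (HX : infinite_type X) (l : list X) : X :=
  proj1_sig (constructive_indefinite_description _ (exists_notin X HX l)).

Lemma pick_notin {X} (HX : infinite_type X) l : ~ In (pick HX l) l.
Proof. unfold pick. destruct (constructive_indefinite_description _ _); auto. Qed.

Fixpoint lst {X} (HX : infinite_type X) (n : nat) : list X :=
  match n with O => nil | S n => pick HX (lst HX n) :: lst HX n end.

Definition xs {X} (HX : infinite_type X) n := pick HX (lst HX n).

Lemma xs_in {X} (HX : infinite_type X) m n : (m < n)%nat -> In (xs HX m) (lst HX n).
Proof.
  induction n; intros H; [lia|]. simpl.
  destruct (Nat.eq_dec m n) as [->|Hne]; [left; reflexivity|].
  right; apply IHn; lia.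
Qed.

Lemma xs_inj {X} (HX : infinite_type X) m n : xs HX m = xs HX n -> m = n.
Proof.
  intros E. destruct (Nat.lt_trichotomy m n) as [H|[H|H]]; auto.
  - exfalso. apply (pick_notin HX (lst HX n)). fold (xs HX n). rewrite <- E. now apply xs_in.
  - exfalso. apply (pick_notin HX (lst HX m)). fold (xs HX m). rewrite E. now apply xs_in.
Qed.

Definition beta {X} (HX : infinite_type X) (x : X) : R :=
  match excluded_middle_informative (exists n, x = xs HX n) with
  | left H => / INR (S (proj1_sig (constructive_indefinite_description _ H)))
  | right _ => 1 end.

Lemma inv_S_bounds m : 0 < / INR (S m) <= 1.
Proof.
  pose proof (pos_INR m). rewrite S_INR. split.
  - apply Rinv_0_lt_compat; lra.
  - rewrite <- Rinv_1. apply Rinv_le_contravar; lra.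
Qed.

Lemma beta_bounds {X} (HX : infinite_type X) x : 0 < beta HX x <= 1.
Proof.
  unfold beta. destruct (excluded_middle_informative _) as [H|H].
  - destruct (constructive_indefinite_description _ H) as [m Hm]; simpl. apply inv_S_bounds.
  - lra.
Qed.

Lemma beta_xs {X} (HX : infinite_type X) n : beta HX (xs HX n) = / INR (S n).
Proof.
  unfold beta. destruct (excluded_middle_informative _) as [H|H].
  - destruct (constructive_indefinite_description _ H) as [m Hm]; simpl.
    apply xs_inj in Hm. now subst.
  - exfalso; apply H; eauto.
Qed.

Lemma beta_small {X} (HX : infinite_type X) d : 0 < d -> exists x, beta HX x <= d.
Proof.
  intros Hd. destruct (archimed_cor1 d Hd) as [N [HN HN0]].
  exists (xs HX N). rewrite beta_xs. apply Rlt_le. eapply Rle_lt_trans; [|exact HN].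
  apply Rinv_le_contravar. apply lt_0_INR; lia. rewrite S_INR; lra.
Qed.

Lemma sqle_bot_pos {X} (f : X -> R) : sqle f ubot -> exists d, 0 < d /\ forall x, d < f x.
Proof.
  intros H. destruct (H (1/2) ltac:(lra)) as [d [Hd Hx]]. exists d; split; auto.
  intros x. destruct (Rle_lt_dec (f x) d) as [h|h]; auto.
  specialize (Hx x h). unfold ubot in Hx. lra.
Qed.

Lemma pos_sqle_bot {X} (f : X -> R) c : 0 < c -> (forall x, c <= f x) -> sqle f ubot.
Proof.
  intros Hc Hf eps He. exists (c/2); split; [lra|]. intros x Hx. specialize (Hf x). lra.
Qed.

Lemma part1 (X : Type) (HX : infinite_type X) :
  (exists beta : X -> R, inU beta /\
     forall alpha : X -> R, inU alpha ->
       exists gamma : X -> R, inU gamma /\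
         ~ (sqle (umeet gamma beta) ubot <-> sqle gamma alpha)).
Proof.
  exists (beta HX). split; [intro x; pose proof (beta_bounds HX x); lra|].
  intros alpha Ha.
  destruct (classic (exists x, 0 < alpha x)) as [[x0 Hx0]|Hn].
  - exists (fun x => if excluded_middle_informative (x = x0) then 0 else 1).
    split.
    + intro x; destruct (excluded_middle_informative _); lra.
    + intros [H1 _].
      assert (Hm : sqle (umeet (fun x => if excluded_middle_informative (x = x0) then 0 else 1) (beta HX)) ubot).
      { apply (pos_sqle_bot _ (beta HX x0)); [apply beta_bounds|].
        intros x. unfold umeet. destruct (excluded_middle_informative _) as [->|Hne].
        - apply Rmax_r.
        - pose proof (beta_bounds HX x0). pose proof (Rmax_l 1 (beta HX x)). lra. }
      destruct (H1 Hm (alpha x0 / 2) ltac:(lra)) as [d [Hd Hx]].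
      specialize (Hx x0). destruct (excluded_middle_informative (x0 = x0)) as [_|C]; [|now elim C].
      specialize (Hx ltac:(lra)). lra.
  - exists (beta HX). split; [intro x; pose proof (beta_bounds HX x); lra|].
    intros [_ H2].
    assert (Hs : sqle (beta HX) alpha).
    { intros eps He. exists 1; split; [lra|]. intros x _.
      destruct (Rle_lt_dec (alpha x) 0) as [h|h]; [lra|]. exfalso; apply Hn; eauto. }
    destruct (sqle_bot_pos _ (H2 Hs)) as [d [Hd Hx]].
    destruct (beta_small HX d Hd) as [x Hb]. specialize (Hx x).
    unfold umeet in Hx. rewrite Rmax_left in Hx by lra. lra.
Qed.

Theorem mainTheorem4 (X : Type) (HX : infinite_type X) :
  (* no Heyting negation *)
  (exists beta : X -> R, inU beta /\
     forall alpha : X -> R, inU alpha ->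
       exists gamma : X -> R, inU gamma /\
         ~ (sqle (umeet gamma beta) ubot <-> sqle gamma alpha))
  /\
  (* consequently, no Heyting implication *)
  ~ (forall beta alpha : X -> R, inU beta -> inU alpha ->
       exists imp : X -> R, inU imp /\
         forall gamma : X -> R, inU gamma ->
           (sqle (umeet gamma beta) alpha <-> sqle gamma imp)).
Proof.
  pose proof (part1 X HX) as P. split; [exact P|].
  intros H. destruct P as [b [Hb Hall]].
  assert (Hu : inU (@ubot X)) by (intro; unfold ubot; lra).
  destruct (H b ubot Hb Hu) as [imp [Himp Heq]].
  destruct (Hall imp Himp) as [g [Hg Hn]]. apply Hn, Heq, Hg.
Qed.
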